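(* If there exists a depth assignment $d:\Sigma^n\to\Sigma$ such that (i) every pair of strings $s,t\in\Sigma^n$ with $d_s\ne d_t$ share a symbol, and (ii) the valid subgraph of $B_n$ has a Hamiltonian cycle, then that cycle $s_0,s_1,\dots,s_{N-1}$ (with $N=k^n$) corresponds to a de Bruijn sequence $s_0[0]s_1[0]\cdots s_{N-1}[0]$ of order $n$ whose discrepancy is at most $n$.
   Context: Let $k\ge 1$ be an integer, $\Sigma=\{0,1,\dots,k-1\}$ with arithmetic on symbols taken modulo $k$, and $n\ge 1$. For $s\in\Sigma^n$ write $s=s[0]\cdots s[n-1]$. The de Bruijn graph $B_n$ has node set $\Sigma^n$ and an arc $(s,t)$ iff $s[1]\cdots s[n-1]=t[0]\cdots t[n-2]$. A depth assignment is any function $d:\Sigma^n\to\Sigma$, written $s\mapsto d_s$. An arc $(s,t)$ of $B_n$ is valid (with respect to $d$) if, with $b=s[0]$ and $c=t[n-1]$, either ($b+1=c$ and $d_s=d_t$) or ($b+1=d_t$ and $c=d_s$); the valid arcs form the valid subgraph. Two strings share a symbol if some $c\in\Sigma$ occurs in both. A de Bruijn sequence of order $n$ is a circular string of length $k^n$ in which every string in $\Sigma^n$ occurs exactly once. The discrepancy of a string $w$ is the maximum over all substrings $s$ of $w$ (viewed circularly) of $\max_{a\in\Sigma}|s|_a-\min_{c\in\Sigma}|s|_c$, where $|s|_a$ is the number of occurrences of $a$ in $s$. *)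

(* Defs.v *)
From mathcomp Require Import all_boot.
Set Implicit Arguments. Unset Strict Implicit. Unset Printing Implicit Defensive.

Section DeBruijn.
Variables (k n : nat).
Local Notation word := (n.-tuple 'I_k).

Definition sym (s : word) (i : nat) : nat := nth 0 (map val s) i.

Definition dB_arc (s t : word) : bool :=
  drop 1 (map val s) == take n.-1 (map val t).

Definition valid_arc (d : word -> 'I_k) (s t : word) : bool :=
  dB_arc s t &&
  (let b := sym s 0 in let c := sym t n.-1 in
   (((b + 1) %% k == c) && (val (d s) == val (d t)))
   || (((b + 1) %% k == val (d t)) && (c == val (d s)))).

Definition share_symbol (s t : word) : Prop := exists c : 'I_k, (c \in s) && (c \in t).

Definition valid_ham_cycle (d : word -> 'I_k) (cyc : seq word) : Prop :=
  [/\ uniq cyc, (forall s : word, s \in cyc) & cycle (valid_arc d) cyc].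
End DeBruijn.

Definition circ_sub (w : seq nat) (i l : nat) : seq nat :=
  [seq nth 0 w ((i + j) %% size w) | j <- iota 0 l].

Definition de_bruijn (k n : nat) (w : seq nat) : Prop :=
  size w = k ^ n /\ all (fun a => a < k) w /\
  forall x : n.-tuple 'I_k,
    #|[set i : 'I_(k ^ n) | circ_sub w i n == map val x]| = 1.

Definition discrepancy_le (k : nat) (w : seq nat) (D : nat) : Prop :=
  forall i l, i < size w -> l <= size w ->
  forall a c : 'I_k,
    (count_mem (val a) (circ_sub w i l) <= count_mem (val c) (circ_sub w i l) + D)%N.

(* Main.v *)
Require Import Defs.
From mathcomp Require Import all_boot zify.

Lemma sym_lt (k n : nat) (s : n.-tuple 'I_k) j : 0 < k -> sym s j < k.
Proof.
move=> k0; rewrite /sym; case: (ltnP j (size (map val s))) => h.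
  by rewrite (nth_map (Ordinal k0)) ?ltn_ord // -(size_map val).
by rewrite nth_default.
Qed.

Lemma arc_sym (k n : nat) (s t : n.-tuple 'I_k) j :
  dB_arc s t -> j < n.-1 -> sym s j.+1 = sym t j.
Proof.
move=> /eqP h jn; rewrite /sym.
by rewrite -add1n -nth_drop h nth_take.
Qed.

Lemma cycle_nth (T : Type) (e : rel T) (x0 : T) (p : seq T) j :
  cycle e p -> j < size p -> e (nth x0 p j) (nth x0 p (j.+1 %% size p)).
Proof.
case: p => [//|x p] /= /(pathP x0) H jp.
have := H j; rewrite size_rcons => /(_ jp).
have -> : x :: rcons p x = rcons (x::p) x by [].
rewrite !nth_rcons /= jp.
case: (ltnP j (size p)) => h.
  by rewrite modn_small.
have ej : j = size p by lia.
by rewrite ej ?ltnn eqxx modnn /=.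
Qed.

Lemma arc_phi (k n : nat) (d : n.-tuple 'I_k -> 'I_k) (s t : n.-tuple 'I_k) (P : nat -> bool) :
  0 < n -> valid_arc d s t ->
  count P (map val t) + P (val (d t)) + P (sym s 0)
  = count P (map val s) + P (val (d s)) + P ((sym s 0 + 1) %% k).
Proof.
move=> n0 /andP[/eqP h hv].
have ss : size (map val s) = n by rewrite size_map size_tuple.
have st : size (map val t) = n by rewrite size_map size_tuple.
have es : map val s = sym s 0 :: drop 1 (map val s).
  by rewrite /sym -(drop_nth 0) ?drop0 // ss.
have et : map val t = rcons (take n.-1 (map val t)) (sym t n.-1).
  rewrite /sym -cats1 -{1}(cat_take_drop n.-1 (map val t)); congr (_ ++ _).
  rewrite (drop_nth 0); last by rewrite st; lia.
  by rewrite drop_oversize // st; lia.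
rewrite {1}es et -h -cats1 count_cat /=.
move: hv; rewrite /=.
case/orP => /andP[/eqP e1 /eqP e2].
  by rewrite e1 e2; lia.
by rewrite e1 e2; lia.
Qed.

Lemma succ_pt (k a c b : nat) : b < k -> a < k -> c < k -> a != c ->
  let r x := (x + (k - c)) %% k in
  let P x := (0 < r x) && (r x <= r a) in
  P b + (b == c) = P ((b + 1) %% k) + (b == a).
Proof.
move=> bk ak ck nac r P; rewrite /P.
have rE x : x < k -> r x = if c <= x then x - c else x + k - c.
  move=> xk; rewrite /r; case: leqP => h.
    have -> : x + (k - c) = x - c + k by lia.
    by rewrite modnDr modn_small; lia.
  by rewrite modn_small; lia.
have sE : (b + 1) %% k = if b + 1 < k then b + 1 else 0.
  case: ltnP => h; first by rewrite modn_small.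
  have -> : b + 1 = k by lia.
  by rewrite modnn.
have s_lt : (b + 1) %% k < k by rewrite ltn_mod; lia.
rewrite (rE _ bk) (rE _ ak) (rE _ s_lt) sE.
move: nac; case: (ltnP (b+1) k); case: (leqP c b); case: (leqP c a); case: (leqP c 0); case: (leqP c (b+1)); 
  case: (b =P c); case: (b =P a); case: (a =P c) => /=; lia.
Qed.

Lemma count_pt (k : nat) (s : seq nat) (f g f' g' : pred nat) :
  all (fun b => b < k) s -> (forall b, b < k -> f b + g b = f' b + g' b) ->
  count f s + count g s = count f' s + count g' s.
Proof.
move=> hs H; elim: s hs => [//|b s IH] /= /andP[hb hs].
have := H b hb; have := IH hs; lia.
Qed.

Lemma mapvalE (k n : nat) (t : n.-tuple 'I_k) : map val t = map (@nat_of_ord k) t.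
Proof. by []. Qed.
Lemma valE (k : nat) (o : 'I_k) : val o = nat_of_ord o.
Proof. by []. Qed.

Theorem theorem3 (k n : nat) (d : n.-tuple 'I_k -> 'I_k) (cyc : seq (n.-tuple 'I_k)) :
  0 < k -> 0 < n ->
  (forall s t : n.-tuple 'I_k, d s != d t -> share_symbol s t) ->
  valid_ham_cycle d cyc ->
  let w := [seq sym s 0 | s <- cyc] in
  de_bruijn k n w /\ discrepancy_le k w n.
Proof.
move=> k0 n0 Hshare [Huniq Hall Hcyc] w.
pose x0 := nseq_tuple n (Ordinal k0).
pose N := size cyc.
have HN : N = k ^ n.
  rewrite /N -(card_uniqP Huniq) -[in RHS](card_ord k) -card_tuple.
  by apply: eq_card => x; rewrite Hall.
have Npos : 0 < N by rewrite HN expn_gt0 k0.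
have sw : size w = N by rewrite size_map.
pose s m := nth x0 cyc (m %% N).
have Harc m : valid_arc d (s m) (s m.+1).
  rewrite /s; have -> : m.+1 %% N = (m %% N).+1 %% N by rewrite -addn1 -modnDml addn1.
  by apply: cycle_nth => //; rewrite ltn_pmod.
have Hw m : nth 0 w (m %% N) = sym (s m) 0.
  by rewrite (nth_map x0) // ltn_pmod.
have Hsym m j : j < n -> sym (s m) j = sym (s (m + j)) 0.
  elim: j m => [|j IH] m jn; first by rewrite addn0.
  rewrite (@arc_sym _ _ _ _ j (proj1 (andP (Harc m)))); last by lia.
  by rewrite IH ?addSnnS //; lia.
have Hwin (P : pred nat) i l :
  count P (map val (s (i + l))) + P (val (d (s (i + l)))) + count P (circ_sub w i l)
  = count P (map val (s i)) + P (val (d (s i)))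
    + count (fun b => P ((b + 1) %% k)) (circ_sub w i l).
  elim: l => [|l IH]; first by rewrite addn0 /circ_sub /= !addn0.
  have -> : circ_sub w i l.+1 = circ_sub w i l ++ [:: sym (s (i + l)) 0].
    by rewrite /circ_sub -addn1 iotaD map_cat /= add0n sw Hw.
  rewrite !count_cat /=.
  have := @arc_phi _ _ _ _ _ P n0 (Harc (i + l)).
  have E1 (t : n.-tuple (ordinal k)) : map val t = map (@nat_of_ord k) t by [].
  have E2 (o : ordinal k) : val o = nat_of_ord o by [].
  rewrite [i + l.+1]addnS !E1 !E2; move: IH; rewrite !E1 !E2; lia.
have Hall_w i l : all (fun b => b < k) (circ_sub w i l).
  apply/allP => b /mapP [j _ ->]; rewrite sw Hw; exact: sym_lt.
split.
  split; first by rewrite sw HN.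
  split.
    by apply/allP => b /mapP [s' _ ->]; exact: sym_lt.
  move=> x.
  have Hc (i : nat) : i < N -> circ_sub w i n = map val (s i).
    move=> iN; apply: (@eq_from_nth _ 0).
      by rewrite /circ_sub !size_map size_iota size_tuple.
    rewrite /circ_sub size_map size_iota => j jn.
    rewrite (nth_map 0) ?size_iota // nth_iota // add0n sw Hw.
    by rewrite -Hsym // /sym (modn_small iN).
  have xin : index x cyc < k ^ n by rewrite -HN index_mem Hall.
  rewrite (_ : [set i : 'I_(k ^ n) | _] = [set Ordinal xin]) ?cards1 //.
  apply/setP => i; rewrite !inE.
  have iN : i < N by rewrite HN ltn_ord.
  rewrite Hc // (inj_eq (inj_map val_inj)) /s (modn_small iN).
  apply/idP/idP.
    move=> /eqP hx; apply/eqP; apply: val_inj => /=.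
    have hx' : nth x0 cyc i = x by apply: val_inj; exact: hx.
    by rewrite -hx' index_uniq.
  move=> /eqP -> /=; apply/eqP; congr val; exact: nth_index.
move=> i l iN lN a c.
case: (a =P c) => [->|nac]; first exact: leq_addr.
have nac' : val a != val c by apply/eqP => h; apply: nac; apply: val_inj.
pose r x := (x + (k - c)) %% k.
pose P x := (0 < r x) && (r x <= r a).
have Hpt := @count_pt k _ P (pred1 (val c)) (fun b => P ((b + 1) %% k))
   (pred1 (val a)) (Hall_w i l).
have := Hpt (fun b hb => @succ_pt k (val a) (val c) b hb (ltn_ord a) (ltn_ord c) nac').
have := Hwin P i l.
set t := s (i + l); set u := s i.
have Ht : count P (map val t) <= n by rewrite -[X in _ <= X](size_tuple t) -(size_map val); exact: count_size.
have Hu : count P (map val u) <= n by rewrite -[X in _ <= X](size_tuple u) -(size_map val); exact: count_size.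
rewrite /= => H1 H2.
case: (leqP (count_mem (val a) (circ_sub w i l)) (count_mem (val c) (circ_sub w i l) + n)) => // hbad.
exfalso.
have hu1 : count P (map val u) = n. move: H1 H2 hbad Ht Hu; rewrite ?mapvalE ?valE. case: (P (d u)); case: (P (d t)) => /=; lia.
have hu2 : P (val (d u)) by move: H1 H2 hbad Ht Hu; rewrite ?mapvalE ?valE; case: (P (d u)); case: (P (d t)) => //=; lia.
have ht1 : count P (map val t) = 0 by move: H1 H2 hbad Ht Hu; rewrite ?mapvalE ?valE; case: (P (d u)); case: (P (d t)) => //=; lia.
have ht2 : ~~ P (val (d t)) by move: H1 H2 hbad Ht Hu; rewrite ?mapvalE ?valE; case: (P (d u)); case: (P (d t)) => //=; lia.
have allu : all P (map val u) by rewrite all_count hu1 size_map size_tuple.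
have hast : ~~ has P (map val t) by rewrite has_count ht1.
case: (d u =P d t) => [e|/eqP ne].
  by move: ht2; rewrite -e hu2.
have [c0 /andP [c0u c0t]] := Hshare _ _ ne.
move/allP: allu => /(_ (val c0) (map_f val c0u)) Pc.
by move/hasPn: hast => /(_ (val c0) (map_f val c0t)); rewrite Pc.
Qed.
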